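(* Let $n\ge1$ and $m\ge2$. The maps $s_0,\dots,s_m$ on the vertex set of $Y_{n,m}$ satisfy the Coxeter relations of $\tilde C_m$: $s_i^2=\mathrm{Id}$ for all $0\le i\le m$; $(s_is_j)^2=\mathrm{Id}$ whenever $|i-j|>1$; $(s_is_{i+1})^3=\mathrm{Id}$ for all $1\le i\le m-2$; and $(s_0s_1)^4=(s_{m-1}s_m)^4=\mathrm{Id}$.
   Context: The Yoke graph $Y_{n,m}$ has vertices the tuples $v=(v_0,\dots,v_{m+1})$ with $v_0,v_{m+1}\in\mathbb{Z}_n$, $v_1,\dots,v_m\in\{0,1\}$, $\sum v_i\equiv0\pmod n$ (bucket entries $v_0,v_{m+1}$ computed mod $n$). For $0\le i\le m$ let $\overleftarrow{s}_i(v)$ be obtained from $v$ by replacing $v_i,v_{i+1}$ with $v_i+1,v_{i+1}-1$, and $\overrightarrow{s}_i(v)$ by replacing them with $v_i-1,v_{i+1}+1$ (whenever the result is a vertex). Define $s_0(v)=\overleftarrow{s}_0(v)$ if $v_1=1$ and $s_0(v)=\overrightarrow{s}_0(v)$ if $v_1=0$; $s_m(v)=\overleftarrow{s}_m(v)$ if $v_m=0$ and $s_m(v)=\overrightarrow{s}_m(v)$ if $v_m=1$; and for $1\le i\le m-1$, $s_i(v)$ is $v$ with entries $v_i$ and $v_{i+1}$ swapped. *)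

(* Defs.v *)
From mathcomp Require Import all_boot all_order all_algebra.
Set Implicit Arguments. Unset Strict Implicit. Unset Printing Implicit Defensive.
Import GRing.Theory Num.Theory.
Local Open Scope ring_scope.

Notation tup m := {ffun 'I_(m.+2) -> int}.

Definition bucket (m : nat) (k : 'I_(m.+2)) : bool :=
  (val k == 0%N) || (val k == m.+1).

(* vertex set of the Yoke graph Y_{n,m}: buckets in Z_n (represented by
   0..n-1), inner entries in {0,1}, total sum = 0 mod n *)
Definition is_vertex (n m : nat) (v : tup m) : bool :=
  [forall k : 'I_(m.+2),
     if bucket k then (0 <= v k) && (v k < n%:Z)
     else (v k == 0) || (v k == 1)]
  && (n%:Z %| \sum_(k < m.+2) v k)%Z.

Definition bnorm (n m : nat) (v : tup m) : tup m :=
  [ffun k => if bucket k then (v k %% n%:Z)%Z else v k].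

Definition sL (n m i : nat) (v : tup m) : tup m :=
  bnorm n [ffun k : 'I_(m.+2) =>
    if val k == i then v k + 1 else if val k == i.+1 then v k - 1 else v k].

Definition sR (n m i : nat) (v : tup m) : tup m :=
  bnorm n [ffun k : 'I_(m.+2) =>
    if val k == i then v k - 1 else if val k == i.+1 then v k + 1 else v k].

Definition sW (m i : nat) (v : tup m) : tup m :=
  [ffun k : 'I_(m.+2) =>
    if val k == i then v (inord i.+1)
    else if val k == i.+1 then v (inord i) else v k].

Definition s (n m i : nat) (v : tup m) : tup m :=
  if i == 0%N then (if v (inord 1) == 1 then sL n 0 v else sR n 0 v)
  else if i == m then (if v (inord m) == 0 then sL n m v else sR n m v)
  else sW i v.

(* Main.v *)
Require Import Defs.
From mathcomp Require Import all_boot all_order all_algebra zify.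
Import GRing.Theory Num.Theory.
Set Implicit Arguments. Unset Strict Implicit.
Local Open Scope ring_scope.

Definition mk3 (m i : nat) (a b c : int) (v : tup m) : tup m :=
  [ffun k => if val k == i then a else if val k == i.+1 then b
             else if val k == i.+2 then c else v k].

Ltac brute := rewrite ?ffunE ?inordK //=; repeat (case: ifP => //=); try lia.

Lemma swapL n m i a b c (v : tup m) : i != 0%N -> i != m -> (i < m)%N ->
  s n i (mk3 i a b c v) = mk3 i b a c v.
Proof.
move=> h0 hm hi; rewrite /s (negbTE h0) (negbTE hm) /sW.
apply/ffunP => k; rewrite !ffunE /= !inordK; try lia.
repeat (case: ifP => //=); lia.
Qed.
Lemma mk3_at1 m i a b c (v : tup m) : (i.+1 < m.+2)%N -> mk3 i a b c v (inord i.+1) = b.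
Proof. move=> h; rewrite ffunE /= inordK //; repeat (case: ifP => //=); lia. Qed.
Lemma mk3_at0 m i a b c (v : tup m) : (i < m.+2)%N -> mk3 i a b c v (inord i) = a.
Proof. by move=> h; rewrite ffunE /= inordK // eqxx. Qed.

Lemma s0mk1 n m a c (v : tup m) : (2 <= m)%N ->
  s n 0 (mk3 0 a 1 c v) = mk3 0 ((a + 1) %% n%:Z)%Z 0 c (bnorm n v).
Proof.
move=> hm; rewrite /s eqxx mk3_at1 ?eqxx /sL /bnorm; last lia.
apply/ffunP => k; rewrite !ffunE /= /bucket.
repeat (case: ifP => //=); try lia.
Qed.
Lemma s0mk0 n m a c (v : tup m) : (2 <= m)%N ->
  s n 0 (mk3 0 a 0 c v) = mk3 0 ((a - 1) %% n%:Z)%Z 1 c (bnorm n v).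
Proof.
move=> hm; rewrite /s eqxx mk3_at1 /sR /bnorm; last lia.
apply/ffunP => k; rewrite !ffunE /= /bucket.
repeat (case: ifP => //=); try lia.
Qed.

Lemma smmk0 n m a c (v : tup m) : (2 <= m)%N ->
  s n m (mk3 m.-1 c 0 a v) = mk3 m.-1 c 1 ((a - 1) %% n%:Z)%Z (bnorm n v).
Proof.
move=> hm; rewrite /s; have -> : (m == 0%N) = false by lia.
have -> : mk3 m.-1 c 0 a v (inord m) = 0.
  rewrite ffunE /= inordK; last lia. repeat (case: ifP => //=); lia.
rewrite eqxx /sL /bnorm.
apply/ffunP => k; rewrite !ffunE /= /bucket.
repeat (case: ifP => //=); try lia.
Qed.

Lemma smmk1 n m a c (v : tup m) : (2 <= m)%N ->
  s n m (mk3 m.-1 c 1 a v) = mk3 m.-1 c 0 ((a + 1) %% n%:Z)%Z (bnorm n v).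
Proof.
move=> hm; rewrite /s; have -> : (m == 0%N) = false by lia.
have -> : mk3 m.-1 c 1 a v (inord m) = 1.
  rewrite ffunE /= inordK; last lia. repeat (case: ifP => //=); lia.
rewrite eqxx (_ : ((1:int) == 0) = false) // /sR /bnorm.
apply/ffunP => k; rewrite !ffunE /= /bucket.
repeat (case: ifP => //=); try lia.
Qed.

Lemma swapR n m i a b c (v : tup m) : i.+1 != m -> (i.+1 < m)%N ->
  s n i.+1 (mk3 i a b c v) = mk3 i a c b v.
Proof.
move=> hm hi; rewrite /s (negbTE hm) /sW.
apply/ffunP => k; rewrite !ffunE /= !inordK; try lia.
repeat (case: ifP => //=); lia.
Qed.

Lemma mk3id m i (v : tup m) : (i.+2 < m.+2)%N ->
  v = mk3 i (v (inord i)) (v (inord i.+1)) (v (inord i.+2)) v.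
Proof.
move=> hi; apply/ffunP => k; rewrite !ffunE /=.
repeat (case: ifP => [/eqP e|_] //=).
all: f_equal; apply: val_inj; rewrite /= inordK; lia.
Qed.
Lemma vert_pt n m (v : tup m) k : is_vertex n v ->
  if bucket k then (0 <= v k < n%:Z) else (v k == 0) || (v k == 1).
Proof. by case/andP => /forallP H _; exact: H k. Qed.

Lemma bnorm_id n m (v : tup m) : is_vertex n v -> bnorm n v = v.
Proof.
move=> hv; apply/ffunP => k; rewrite ffunE; have := vert_pt k hv.
by case: bucket => // h; rewrite modz_small.
Qed.

Lemma modfix n (a : int) (e : int) : 0 <= a < n%:Z -> e = 0 -> ((a + e) %% n%:Z)%Z = a.
Proof. by move=> h ->; rewrite addr0 modz_small. Qed.

Lemma Lfour n (a e1 e2 e3 e4 : int) : 0 <= a < n%:Z -> e1 + e2 + e3 + e4 = 0 ->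
  ((((((((a + e1) %% n%:Z)%Z + e2) %% n%:Z)%Z + e3) %% n%:Z)%Z + e4) %% n%:Z)%Z = a.
Proof.
move=> ha he.
rewrite (modzDml (((((a + e1) %% n%:Z)%Z + e2) %% n%:Z)%Z + e3)).
rewrite -(addrA _ e3 e4) (modzDml (((a + e1) %% n%:Z)%Z + e2)).
rewrite -(addrA _ e2) (modzDml (a + e1)) -!addrA.
by rewrite (_ : e1 + (e2 + (e3 + e4)) = 0) ?addr0 ?modz_small // !addrA.
Qed.

Lemma Ltwo n (a e1 e2 : int) : 0 <= a < n%:Z -> e1 + e2 = 0 ->
  ((((a + e1) %% n%:Z)%Z + e2) %% n%:Z)%Z = a.
Proof.
by move=> ha he; rewrite modzDml -addrA he addr0 modz_small.
Qed.

Lemma B2_0 n m a b c (w : tup m) : (2 <= m)%N -> bnorm n w = w ->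
  0 <= a < n%:Z -> (b == 0) || (b == 1) -> (c == 0) || (c == 1) ->
  iter 4 (fun x => s n 0 (s n 1 x)) (mk3 0 a b c w) = mk3 0 a b c w.
Proof.
move=> hm bw ha hb hc.
have sw := fun a b c v => @swapR n m 0 a b c v (ltac:(lia)) (ltac:(lia)).
have s01 := fun a c v => @s0mk1 n m a c v hm.
have s00 := fun a c v => @s0mk0 n m a c v hm.
cbv beta iota zeta delta [iter].
case/orP: hb => /eqP ->; case/orP: hc => /eqP ->;
rewrite ?(sw, s01, s00, bw); f_equal; apply: Lfour => //.
Qed.

Lemma s_out n m i (v : tup m) (p : 'I_m.+2) : (i <= m)%N -> val p != i -> val p != i.+1 ->
  ~~ bucket p -> s n i v p = v p.
Proof.
move=> hi h1 h2 hb; rewrite /s.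
case: ifP => [/eqP ?|_].
  subst i; case: ifP => _; by rewrite /sL /sR !ffunE (negbTE hb) (negbTE h1) (negbTE h2).
case: ifP => [/eqP ?|_].
  subst i; case: ifP => _; by rewrite /sL /sR !ffunE (negbTE hb) (negbTE h1) (negbTE h2).
by rewrite /sW ffunE (negbTE h1) (negbTE h2).
Qed.


Definition dd (x : int) : int := if x == 1 then 1 else -1.
Definition dm (x : int) : int := if x == 0 then 1 else -1.

Lemma sE0 n m (v : tup m) (k : 'I_m.+2) : (1 <= m)%N -> s n 0 v k =
  if val k == 0%N then ((v k + dd (v (inord 1))) %% n%:Z)%Z
  else if val k == 1%N then v k - dd (v (inord 1))
  else if val k == m.+1 then (v k %% n%:Z)%Z else v k.
Proof.
move=> hm; rewrite /s eqxx /dd /sL /sR.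
case: ifP => _; rewrite !ffunE /bucket /=; repeat (case: ifP => //=); lia.
Qed.

Lemma sEm n m (v : tup m) (k : 'I_m.+2) : (1 <= m)%N -> s n m v k =
  if val k == 0%N then (v k %% n%:Z)%Z
  else if val k == m then v k + dm (v (inord m))
  else if val k == m.+1 then ((v k - dm (v (inord m))) %% n%:Z)%Z else v k.
Proof.
move=> hm; rewrite /s (_ : (m == 0%N) = false); last lia.
rewrite eqxx /dm /sL /sR.
case: ifP => _; rewrite !ffunE /bucket /=; repeat (case: ifP => //=); try lia.
all: by rewrite opprK.
Qed.

Lemma sEW n m i (v : tup m) (k : 'I_m.+2) : i != 0%N -> i != m -> s n i v k =
  if val k == i then v (inord i.+1) else if val k == i.+1 then v (inord i) else v k.
Proof. by move=> h0 hm; rewrite /s (negbTE h0) (negbTE hm) /sW ffunE. Qed.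


Lemma comm0m n m' (v : tup m'.+2) : s n 0 (s n m'.+2 v) = s n m'.+2 (s n 0 v).
Proof.
apply/ffunP => k; rewrite !sE0 // !sEm // !sE0 // /= !inordK //.
repeat (case: ifP => H; rewrite ?H /=; move: H => ?); try lia.
all: by rewrite ?modz_mod ?modzDml.
Qed.

Lemma comm0W n m' j (v : tup m'.+2) : (2 <= j)%N -> (j <= m'.+1)%N ->
  s n 0 (s n j v) = s n j (s n 0 v).
Proof.
move=> h1 h2; have hj0 : j != 0%N by lia. have hjm : j != m'.+2 by lia.
apply/ffunP => k; rewrite !sE0 // !(sEW _ _ _ hj0 hjm) // !sE0 // /= !inordK; try lia.
repeat (case: ifP => H; rewrite ?H /=; move: H => ?); try lia.
Qed.

Lemma commWm n m' i (v : tup m'.+2) : (1 <= i)%N -> (i <= m')%N ->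
  s n i (s n m'.+2 v) = s n m'.+2 (s n i v).
Proof.
move=> h1 h2; have hj0 : i != 0%N by lia. have hjm : i != m'.+2 by lia.
apply/ffunP => k; rewrite !(sEW _ _ _ hj0 hjm) // !sEm // !(sEW _ _ _ hj0 hjm) /= !inordK; try lia.
repeat (case: ifP => H; rewrite ?H /=; move: H => ?); try lia.
Qed.

Lemma commWW n m i j (v : tup m) : (1 <= i)%N -> (i.+1 < j)%N -> (j < m)%N ->
  s n i (s n j v) = s n j (s n i v).
Proof.
move=> h1 h2 h3; have hj0 : j != 0%N by lia. have hjm : j != m by lia.
have hi0 : i != 0%N by lia. have him : i != m by lia.
apply/ffunP => k; rewrite !(sEW _ _ _ hi0 him) // !(sEW _ _ _ hj0 hjm) // !(sEW _ _ _ hi0 him) /= !inordK; try lia.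
repeat (case: ifP => H; rewrite ?H /=; move: H => ?); try lia.
Qed.

Lemma B2_m n m a b c (w : tup m) : (2 <= m)%N -> bnorm n w = w ->
  0 <= a < n%:Z -> (b == 0) || (b == 1) -> (c == 0) || (c == 1) ->
  iter 4 (fun x => s n m.-1 (s n m x)) (mk3 m.-1 c b a w) = mk3 m.-1 c b a w.
Proof.
move=> hm bw ha hb hc.
have sw := fun a b c v => @swapL n m m.-1 a b c v (ltac:(lia)) (ltac:(lia)) (ltac:(lia)).
have s01 := fun a c v => @smmk1 n m a c v hm.
have s00 := fun a c v => @smmk0 n m a c v hm.
cbv beta iota zeta delta [iter].
case/orP: hb => /eqP ->; case/orP: hc => /eqP ->;
rewrite ?(sw, s01, s00, bw); f_equal; apply: Lfour => //.
Qed.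

Lemma inv0 n m a b c (w : tup m) : (2 <= m)%N -> bnorm n w = w ->
  0 <= a < n%:Z -> (b == 0) || (b == 1) ->
  s n 0 (s n 0 (mk3 0 a b c w)) = mk3 0 a b c w.
Proof.
move=> hm bw ha hb.
case/orP: hb => /eqP ->; rewrite ?(s0mk1, s0mk0, bw) //; f_equal; apply: Ltwo => //.
Qed.

Lemma invm n m a b c (w : tup m) : (2 <= m)%N -> bnorm n w = w ->
  0 <= a < n%:Z -> (b == 0) || (b == 1) ->
  s n m (s n m (mk3 m.-1 c b a w)) = mk3 m.-1 c b a w.
Proof.
move=> hm bw ha hb.
case/orP: hb => /eqP ->; rewrite ?(smmk1, smmk0, bw) //; f_equal; apply: Ltwo => //.
Qed.

Lemma braid n m i a b c (w : tup m) : (1 <= i)%N -> (i <= m - 2)%N ->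
  iter 3 (fun x => s n i (s n i.+1 x)) (mk3 i a b c w) = mk3 i a b c w.
Proof.
move=> h1 h2.
have sl := fun a b c v => @swapL n m i a b c v (ltac:(lia)) (ltac:(lia)) (ltac:(lia)).
have sr := fun a b c v => @swapR n m i a b c v (ltac:(lia)) (ltac:(lia)).
cbv beta iota zeta delta [iter].
by rewrite ?(sl, sr).
Qed.

Lemma vin n m (v : tup m) j : is_vertex n v -> (0 < j)%N -> (j < m.+1)%N ->
  (v (inord j) == 0) || (v (inord j) == 1).
Proof.
move=> hv h1 h2; have := vert_pt (inord j) hv.
rewrite /bucket /= inordK; last lia.
by rewrite (_ : (j == 0%N) || (j == m.+1) = false) //; lia.
Qed.

Lemma vb n m (v : tup m) j : is_vertex n v -> (j == 0%N) || (j == m.+1) ->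
  0 <= v (inord j) < n%:Z.
Proof.
move=> hv h; have := vert_pt (inord j) hv.
by rewrite /bucket /= inordK ?h //; lia.
Qed.

Lemma inv_all n m' (v : tup m'.+2) i : is_vertex n v -> (i <= m'.+2)%N ->
  s n i (s n i v) = v.
Proof.
move=> hv hi; have bw := bnorm_id hv.
have [->|h0] := eqVneq i 0%N.
  have E := @mk3id _ 0 v (ltac:(lia)).
  rewrite [in LHS]E inv0 -?E //; first (apply: (vb hv); lia).
  apply: (vin hv); lia.
have [->|hm] := eqVneq i m'.+2.
  have E := @mk3id _ m'.+2.-1 v (ltac:(lia)).
  rewrite [in LHS]E invm -?E //; first (apply: (vb hv); lia).
  apply: (vin hv); lia.
have E := @mk3id _ i v (ltac:(lia)).
rewrite [in LHS]E !swapL -?E //; lia.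
Qed.

Lemma commgen n m' (i j : nat) : (i.+1 < j)%N -> (j <= m'.+2)%N ->
  forall w : tup m'.+2, s n i (s n j w) = s n j (s n i w).
Proof.
move=> h1 h2 w.
have [->|hi] := eqVneq i 0%N.
  have [->|hj] := eqVneq j m'.+2; first exact: comm0m.
  apply: comm0W; lia.
have [->|hj] := eqVneq j m'.+2; first (apply: commWm; lia).
apply: commWW; lia.
Qed.

Local Close Scope ring_scope.

Theorem proposition3p15 (n m : nat) : (1 <= n)%N -> (2 <= m)%N ->
  forall v : {ffun 'I_(m.+2) -> int}, is_vertex n v ->
  [/\ (forall i, (i <= m)%N -> s n i (s n i v) = v),
      (forall i j, (i <= m)%N -> (j <= m)%N -> (j.+1 < i)%N || (i.+1 < j)%N ->
         iter 2 (fun w => s n i (s n j w)) v = v),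
      (forall i, (1 <= i)%N -> (i <= m - 2)%N ->
         iter 3 (fun w => s n i (s n i.+1 w)) v = v),
      iter 4 (fun w => s n 0 (s n 1 w)) v = v
    & iter 4 (fun w => s n m.-1 (s n m w)) v = v].
Proof.
move=> hn; case: m => [|[|m']] // _ v hv.
have bw := bnorm_id hv.
split.
- by move=> i hi; apply: inv_all.
- move=> i j hi hj hij; cbv beta iota zeta delta [iter].
  have comm : forall w : tup m'.+2, s n i (s n j w) = s n j (s n i w).
    case/orP: hij => h w; first by rewrite (@commgen n m' j i h hi).
    exact: (@commgen n m' i j h hj).
  by rewrite -comm !inv_all.
- move=> i h1 h2; have E := @mk3id _ i v (ltac:(lia)).
  by rewrite [in LHS]E braid -?E.
- have E := @mk3id _ 0 v (ltac:(lia)).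
  rewrite [in LHS]E B2_0 -?E //; first (apply: (vb hv); lia).
  + apply: (vin hv); lia.
  + apply: (vin hv); lia.
- have E := @mk3id _ m'.+2.-1 v (ltac:(lia)).
  rewrite [in LHS]E B2_m -?E //; first (apply: (vb hv); lia).
  + apply: (vin hv); lia.
  + apply: (vin hv); lia.
Qed.
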